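(* Let $\mathcal{C}$ be a pre-Hilbert $*$-category and let $(s_k\colon A_k\to X)_{k=1}^n$ be a split wide cospan in $\mathcal{C}$. Then the equations \[ t_1=s_1, \qquad t_{m+1} = s_{m+1} - \sum_{k=1}^m t_k (t_k^* t_k)^{-1} t_k^* s_{m+1} \] recursively define an orthogonal wide cospan $(t_k\colon A_k\to X)_{k=1}^n$ of closed monomorphisms such that $t_1\cup t_2\cup\dots\cup t_m = s_1\cup s_2\cup\dots\cup s_m$ (as subobjects of $X$) for each $m\in\{1,\dots,n\}$.
   Context: A $*$-category is a category with a choice of $f^*\colon Y\to X$ for each $f\colon X\to Y$ such that $1^*=1$, $(gf)^*=f^*g^*$, $(f^* )^*=f$. A morphism $f$ is an isometry if $f^*f=1$. An orthonormal biproduct is a biproduct $(X,s_1,r_1,s_2,r_2)$ with $r_k=s_k^*$. A pre-Hilbert $*$-category is a $*$-category with (R1) a zero object, (R2) orthonormal biproducts of all pairs of objects, (R3) an isometric kernel (isometric equaliser with the zero morphism) for every morphism, and (R4) every diagonal $\Delta\colon X\to X\oplus X$ a kernel of some morphism. A pre-Hilbert $*$-category is additive (enriched in abelian groups via its biproducts), which gives the subtraction and sums used. A closed monomorphism is a morphism $f$ with $f^*f$ invertible. A wide cospan $(s_k\colon A_k\to X)_{k=1}^n$ is a finite family of morphisms with common codomain; a retraction of it is a family $(r_k\colon X\to A_k)_{k=1}^n$ with $r_ks_j = 1$ if $j=k$ and $0$ otherwise; the cospan is split if it has a retraction. It is orthogonal if $s_j^*s_k=0$ for all $j\neq k$. The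 union of subobjects is their supremum in the poset of subobjects of $X$; the union of (subobjects represented by) the legs of a split cospan exists and is represented by $\begin{bmatrix}s_1&\cdots&s_n\end{bmatrix}\colon A_1\oplus\dots\oplus A_n\to X$. *)

(* Defs.v *)
(* hom-sets are zmodTypes (the additive enrichment of a
   pre-Hilbert *-category); everything else is stated categorically. *)
From HB Require Import structures.
From mathcomp Require Import all_boot all_algebra.
From Stdlib Require Import ClassicalEpsilon.
Set Implicit Arguments. Unset Strict Implicit. Unset Printing Implicit Defensive.
Import GRing.Theory.
Local Open Scope ring_scope.

Record starcat := StarCat {
  Obj : Type;
  Mor : Obj -> Obj -> zmodType;
  comp : forall X Y Z : Obj, Mor Y Z -> Mor X Y -> Mor X Z;
  idm : forall X : Obj, Mor X X;
  star : forall X Y : Obj, Mor X Y -> Mor Y X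
}.
Arguments Mor : clear implicits.
Arguments comp {s X Y Z}.
Arguments idm {s X}.
Arguments star {s X Y}.

Notation "g \oc f" := (comp g f) (at level 40, left associativity).
Notation "f ^*c" := (star f) (at level 2, format "f ^*c").

Section Defs.
Variable C : starcat.

Definition additive_star_category : Prop :=
  (forall (W X Y Z : Obj C) (h : Mor C Y Z) (g : Mor C X Y) (f : Mor C W X),
      h \oc (g \oc f) = (h \oc g) \oc f) /\
  (forall (X Y : Obj C) (f : Mor C X Y), idm \oc f = f /\ f \oc idm = f) /\
  (forall (X Y Z : Obj C) (g g' : Mor C Y Z) (f : Mor C X Y),
      (g + g') \oc f = g \oc f + g' \oc f) /\
  (forall (X Y Z : Obj C) (g : Mor C Y Z) (f f' : Mor C X Y),
      g \oc (f + f') = g \oc f + g \oc f') /\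
  (forall X : Obj C, (idm : Mor C X X)^*c = idm) /\
  (forall (X Y Z : Obj C) (g : Mor C Y Z) (f : Mor C X Y),
      (g \oc f)^*c = f^*c \oc g^*c) /\
  (forall (X Y : Obj C) (f : Mor C X Y), (f^*c)^*c = f).

Definition isometry (X Y : Obj C) (f : Mor C X Y) : Prop := f^*c \oc f = idm.

Definition is_zero_object (Z : Obj C) : Prop :=
  forall X : Obj C,
    (exists f : Mor C X Z, forall g : Mor C X Z, g = f) /\
    (exists f : Mor C Z X, forall g : Mor C Z X, g = f).

Definition is_biproduct (A B P : Obj C) (s1 : Mor C A P) (r1 : Mor C P A)
    (s2 : Mor C B P) (r2 : Mor C P B) : Prop :=
  r1 \oc s1 = idm /\ r2 \oc s2 = idm /\ r2 \oc s1 = 0 /\ r1 \oc s2 = 0 /\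
  (forall (Y : Obj C) (f1 : Mor C Y A) (f2 : Mor C Y B),
     exists h : Mor C Y P, (r1 \oc h = f1 /\ r2 \oc h = f2) /\
       forall h' : Mor C Y P, r1 \oc h' = f1 -> r2 \oc h' = f2 -> h' = h) /\
  (forall (Y : Obj C) (f1 : Mor C A Y) (f2 : Mor C B Y),
     exists h : Mor C P Y, (h \oc s1 = f1 /\ h \oc s2 = f2) /\
       forall h' : Mor C P Y, h' \oc s1 = f1 -> h' \oc s2 = f2 -> h' = h).

Definition is_orthonormal_biproduct (A B P : Obj C) (s1 : Mor C A P)
    (r1 : Mor C P A) (s2 : Mor C B P) (r2 : Mor C P B) : Prop :=
  is_biproduct s1 r1 s2 r2 /\ r1 = s1^*c /\ r2 = s2^*c.

Definition is_kernel (K X Y : Obj C) (f : Mor C X Y) (k : Mor C K X) : Prop :=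
  f \oc k = 0 /\
  forall (W : Obj C) (g : Mor C W X), f \oc g = 0 ->
    exists h : Mor C W K, k \oc h = g /\
      forall h' : Mor C W K, k \oc h' = g -> h' = h.

Definition pre_Hilbert : Prop :=
  additive_star_category /\
  (exists Z : Obj C, is_zero_object Z) /\
  (forall A B : Obj C, exists (P : Obj C) (s1 : Mor C A P)
              (r1 : Mor C P A) (s2 : Mor C B P) (r2 : Mor C P B),
              is_orthonormal_biproduct s1 r1 s2 r2) /\
  (forall (X Y : Obj C) (f : Mor C X Y), exists (K : Obj C)
              (k : Mor C K X), isometry k /\ is_kernel f k) /\
  (forall (X P : Obj C) (s1 : Mor C X P) (r1 : Mor C P X)
              (s2 : Mor C X P) (r2 : Mor C P X) (d : Mor C X P),
              is_orthonormal_biproduct s1 r1 s2 r2 ->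
              r1 \oc d = idm -> r2 \oc d = idm ->
              exists (Y : Obj C) (f : Mor C P Y), is_kernel f d).

Definition is_inverse (X : Obj C) (f g : Mor C X X) : Prop :=
  g \oc f = idm /\ f \oc g = idm.

Definition invertible (X : Obj C) (f : Mor C X X) : Prop :=
  exists g : Mor C X X, is_inverse f g.

(* the inverse of an invertible endomorphism (junk value 0 otherwise) *)
Definition minv (X : Obj C) (f : Mor C X X) : Mor C X X :=
  match excluded_middle_informative (invertible f) with
  | left H => proj1_sig (constructive_indefinite_description _ H)
  | right _ => 0
  end.

Definition closed_mono (A X : Obj C) (f : Mor C A X) : Prop :=
  invertible (f^*c \oc f).

Definition mono (A X : Obj C) (f : Mor C A X) : Prop :=
  forall (W : Obj C) (g h : Mor C W A), f \oc g = f \oc h -> g = h.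

Definition sub_le (A B X : Obj C) (f : Mor C A X) (g : Mor C B X) : Prop :=
  exists h : Mor C A B, f = g \oc h.

Definition is_union (U X : Obj C) (u : Mor C U X) (A : nat -> Obj C)
    (f : forall k, Mor C (A k) X) (m : nat) : Prop :=
  mono u /\ (forall k, (k < m)%N -> sub_le (f k) u) /\
  (forall (V : Obj C) (v : Mor C V X), mono v ->
     (forall k, (k < m)%N -> sub_le (f k) v) -> sub_le u v).

Definition split_cospan (n : nat) (X : Obj C) (A : nat -> Obj C)
    (f : forall k, Mor C (A k) X) : Prop :=
  exists r : forall k, Mor C X (A k),
    (forall k, (k < n)%N -> r k \oc f k = idm) /\
    (forall j k, (j < n)%N -> (k < n)%N -> j <> k -> r k \oc f j = 0).

Definition orthogonal_cospan (n : nat) (X : Obj C) (A : nat -> Obj C)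
    (f : forall k, Mor C (A k) X) : Prop :=
  forall j k, (j < n)%N -> (k < n)%N -> j <> k -> (f j)^*c \oc f k = 0.

End Defs.

(* Main.v *)
Require Import Defs.
From mathcomp Require Import all_boot all_algebra.
From Stdlib Require Import ClassicalEpsilon PeanoNat.
Set Implicit Arguments. Unset Strict Implicit. Unset Printing Implicit Defensive.
Import GRing.Theory.
Local Open Scope ring_scope.

Lemma ocA (C : starcat) (HA : additive_star_category C) (W X Y Z : Obj C)
  (h : Mor C Y Z) (g : Mor C X Y) (f : Mor C W X) : h \oc (g \oc f) = (h \oc g) \oc f.
Proof. by case: HA => H _; apply: H. Qed.
Lemma oc1l (C : starcat) (HA : additive_star_category C) (X Y : Obj C)
  (f : Mor C X Y) : idm \oc f = f.
Proof. by case: HA => _ [H _]; case: (H _ _ f). Qed.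
Lemma oc1r (C : starcat) (HA : additive_star_category C) (X Y : Obj C)
  (f : Mor C X Y) : f \oc idm = f.
Proof. by case: HA => _ [H _]; case: (H _ _ f). Qed.
Lemma ocDl (C : starcat) (HA : additive_star_category C) (X Y Z : Obj C)
  (g g' : Mor C Y Z) (f : Mor C X Y) : (g + g') \oc f = g \oc f + g' \oc f.
Proof. by case: HA => _ [_ [H _]]; apply: H. Qed.
Lemma ocDr (C : starcat) (HA : additive_star_category C) (X Y Z : Obj C)
  (g : Mor C Y Z) (f f' : Mor C X Y) : g \oc (f + f') = g \oc f + g \oc f'.
Proof. by case: HA => _ [_ [_ [H _]]]; apply: H. Qed.
Lemma st1 (C : starcat) (HA : additive_star_category C) (X : Obj C) :
  (idm : Mor C X X)^*c = idm.
Proof. by case: HA => _ [_ [_ [_ [H _]]]]; apply: H. Qed.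
Lemma stM (C : starcat) (HA : additive_star_category C) (X Y Z : Obj C)
  (g : Mor C Y Z) (f : Mor C X Y) : (g \oc f)^*c = f^*c \oc g^*c.
Proof. by case: HA => _ [_ [_ [_ [_ [H _]]]]]; apply: H. Qed.
Lemma stK (C : starcat) (HA : additive_star_category C) (X Y : Obj C)
  (f : Mor C X Y) : (f^*c)^*c = f.
Proof. by case: HA => _ [_ [_ [_ [_ [_ H]]]]]; apply: H. Qed.

Lemma oc0r (C : starcat) (HA : additive_star_category C) (X Y Z : Obj C)
  (g : Mor C Y Z) : g \oc (0 : Mor C X Y) = 0.
Proof. by apply: (addrI (g \oc 0)); rewrite -ocDr // !addr0. Qed.
Lemma oc0l (C : starcat) (HA : additive_star_category C) (X Y Z : Obj C)
  (f : Mor C X Y) : (0 : Mor C Y Z) \oc f = 0.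
Proof. by apply: (addrI (0 \oc f)); rewrite -ocDl // !addr0. Qed.
Lemma ocNr (C : starcat) (HA : additive_star_category C) (X Y Z : Obj C)
  (g : Mor C Y Z) (f : Mor C X Y) : g \oc (- f) = - (g \oc f).
Proof. by apply: (addrI (g \oc f)); rewrite -ocDr // !subrr oc0r. Qed.
Lemma ocNl (C : starcat) (HA : additive_star_category C) (X Y Z : Obj C)
  (g : Mor C Y Z) (f : Mor C X Y) : (- g) \oc f = - (g \oc f).
Proof. by apply: (addrI (g \oc f)); rewrite -ocDl // !subrr oc0l. Qed.
Lemma ocBr (C : starcat) (HA : additive_star_category C) (X Y Z : Obj C)
  (g : Mor C Y Z) (f f' : Mor C X Y) : g \oc (f - f') = g \oc f - g \oc f'.
Proof. by rewrite ocDr // ocNr. Qed.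
Lemma ocBl (C : starcat) (HA : additive_star_category C) (X Y Z : Obj C)
  (g g' : Mor C Y Z) (f : Mor C X Y) : (g - g') \oc f = g \oc f - g' \oc f.
Proof. by rewrite ocDl // ocNl. Qed.
Lemma oc_sumr (C : starcat) (HA : additive_star_category C) (X Y Z : Obj C)
  (g : Mor C Y Z) m (F : 'I_m -> Mor C X Y) :
  g \oc (\sum_(k < m) F k) = \sum_(k < m) (g \oc F k).
Proof. exact: (big_morph (fun f => g \oc f) (ocDr HA g) (oc0r HA _ g)). Qed.
Lemma oc_suml (C : starcat) (HA : additive_star_category C) (X Y Z : Obj C)
  (f : Mor C X Y) m (F : 'I_m -> Mor C Y Z) :
  (\sum_(k < m) F k) \oc f = \sum_(k < m) (F k \oc f).
Proof. exact: (big_morph (fun g => g \oc f) (fun a b => ocDl HA a b f) (oc0l HA _ f)). Qed.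

Lemma st0 (C : starcat) (HA : additive_star_category C) (Z : Obj C)
  (HZ : is_zero_object Z) (X Y : Obj C) : (0 : Mor C X Y)^*c = 0.
Proof.
have -> : (0 : Mor C X Y) = (0 : Mor C Z Y) \oc (0 : Mor C X Z) by rewrite oc0r.
rewrite stM //.
have [[a Ha] _] := HZ Y.
by rewrite (Ha ((0 : Mor C Z Y)^*c)) -(Ha 0) oc0r.
Qed.

Lemma minvP (C : starcat) (X : Obj C) (f : Mor C X X) :
  invertible f -> is_inverse f (minv f).
Proof.
rewrite /minv; case: excluded_middle_informative => // H _.
by case: constructive_indefinite_description.
Qed.

Lemma split_closed (C : starcat) (HA : additive_star_category C)
  (HR3 : forall (X Y : Obj C) (f : Mor C X Y), exists (K : Obj C)
              (k : Mor C K X), Defs.isometry k /\ is_kernel f k)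
  (A X : Obj C) (f : Mor C A X) (r : Mor C X A) :
  r \oc f = idm -> closed_mono f.
Proof.
move=> rf.
have [K [k [kiso [gk0 kker]]]] := HR3 _ _ (idm - f \oc r).
have gf0 : (idm - f \oc r) \oc f = 0.
  by rewrite ocBl // oc1l // -ocA // rf oc1r // subrr.
have [h [kh _]] := kker _ _ gf0.
have ekk : k = f \oc (r \oc k).
  move: gk0; rewrite ocBl // oc1l // -ocA //.
  by move/eqP; rewrite subr_eq0 => /eqP.
set h' := r \oc k in ekk.
have hh' : h' \oc h = idm.
  have E : r \oc f = r \oc (f \oc (h' \oc h)).
    by rewrite [f \oc (h' \oc h)]ocA // -ekk kh.
  by move: E; rewrite ocA // rf !oc1l.
have h'h : h \oc h' = idm.
  have E : k^*c \oc k = k^*c \oc (k \oc (h \oc h')).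
    by rewrite [k \oc (h \oc h')]ocA // kh -ekk.
  by move: E; rewrite ocA // kiso !oc1l.
clearbody h'.
have E : f^*c \oc f = h^*c \oc h.
  by rewrite -kh stM // -ocA // [k^*c \oc (k \oc h)]ocA // kiso oc1l.
rewrite /closed_mono E.
exists (h' \oc h'^*c); split.
- by rewrite -ocA // [h'^*c \oc (h^*c \oc h)]ocA // -stM // h'h st1 // oc1l.
- by rewrite -ocA // [h \oc (h' \oc h'^*c)]ocA // h'h oc1l // -stM // hh' st1.
Qed.

Lemma coprod (C : starcat) (HA : additive_star_category C) (Z : Obj C)
  (HZ : is_zero_object Z)
  (HR2 : forall A B : Obj C, exists (P : Obj C) (s1 : Mor C A P)
              (r1 : Mor C P A) (s2 : Mor C B P) (r2 : Mor C P B),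
              is_orthonormal_biproduct s1 r1 s2 r2)
  (A : nat -> Obj C) (j : nat) :
 exists (U : Obj C) (inj : forall k, Mor C (A k) U),
  (forall Y (f : forall k, Mor C (A k) Y), exists g : Mor C U Y,
      forall k, (k < j)%N -> g \oc inj k = f k) /\
  (forall Y (g g' : Mor C U Y),
      (forall k, (k < j)%N -> g \oc inj k = g' \oc inj k) -> g = g').
Proof.
elim: j => [|j [U [inj [Hex Hun]]]].
  exists Z, (fun k => 0); split.
    by move=> Y f; exists 0.
  move=> Y g g' _; have [_ [a Ha]] := HZ Y.
  by rewrite (Ha g) (Ha g').
have [P [s1 [r1 [s2 [r2 [[_ [_ [_ [_ [_ Hcop]]]]] _]]]]]] := HR2 U (A j).
pose inj' k : Mor C (A k) P :=
  match Nat.eq_dec k j with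
  | left e => eq_rect_r (fun i => Mor C (A i) P) s2 e
  | right _ => s1 \oc inj k
  end.
have inj'lt k : (k < j)%N -> inj' k = s1 \oc inj k.
  rewrite /inj'; case: Nat.eq_dec => // e; subst k; by rewrite ltnn.
have inj'j : inj' j = s2.
  rewrite /inj'; case: Nat.eq_dec => // e.
  by rewrite (eq_irrelevance e erefl).
exists P, inj'; split.
  move=> Y f; have [g0 Hg0] := Hex Y f.
  have [h [[h1 h2] _]] := Hcop Y g0 (f j).
  exists h => k; rewrite ltnS leq_eqVlt => /orP [/eqP -> | kj].
    by rewrite inj'j.
  by rewrite inj'lt // ocA // h1 Hg0.
move=> Y g g' E.
have E1 : g \oc s1 = g' \oc s1.
  apply: Hun => k kj; rewrite -!ocA // -inj'lt //; apply: E.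
  by rewrite ltnS ltnW.
have E2 : g \oc s2 = g' \oc s2 by rewrite -inj'j; apply: E.
have [h [_ Hu]] := Hcop Y (g \oc s1) (g \oc s2).
by rewrite (Hu g) // (Hu g') // -?E1 -?E2.
Qed.

Lemma union_s (C : starcat) (HA : additive_star_category C) (Z : Obj C)
  (HZ : is_zero_object Z)
  (HR2 : forall A B : Obj C, exists (P : Obj C) (s1 : Mor C A P)
              (r1 : Mor C P A) (s2 : Mor C B P) (r2 : Mor C P B),
              is_orthonormal_biproduct s1 r1 s2 r2)
  (n : nat) (X : Obj C) (A : nat -> Obj C) (s : forall k, Mor C (A k) X)
  (r : forall k, Mor C X (A k))
  (Hr1 : forall k, (k < n)%N -> r k \oc s k = idm)
  (Hr0 : forall j k, (j < n)%N -> (k < n)%N -> j <> k -> r k \oc s j = 0)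
  (j : nat) (jn : (j <= n)%N) :
  exists (U : Obj C) (u : Mor C U X), is_union u s j.
Proof.
have [U [inj [Hex Hun]]] := coprod HA HZ HR2 A j.
have [u Hu] := Hex X s.
pose rho := \sum_(k < j) (inj k \oc r k).
have rhou : rho \oc u = idm.
  apply: Hun => i ij.
  rewrite -ocA // Hu // oc1l // /rho oc_suml // (bigD1 (Ordinal ij)) //=.
  rewrite big1 ?addr0.
    by rewrite -ocA // Hr1 ?oc1r // (leq_trans ij jn).
  move=> k kne; rewrite -ocA // Hr0 ?oc0r // ?(leq_trans (ltn_ord k) jn) ?(leq_trans ij jn) //.
  by move=> e; move/eqP: kne; apply; apply: val_inj.
exists U, u; split; last split.
- move=> W g h e.
  by rewrite -[g](oc1l HA) -rhou -ocA // e ocA // rhou oc1l.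
- by move=> k kj; exists (inj k); rewrite Hu.
- move=> V v vmono Hv.
  have H : forall k, exists h : Mor C (A k) V, (k < j)%N -> s k = v \oc h.
    move=> k; case: (ltnP k j) => kj.
      by have [h Hh] := Hv k kj; exists h.
    by exists 0.
  pose f k := proj1_sig (constructive_indefinite_description _ (H k)).
  have Hf : forall k, (k < j)%N -> s k = v \oc f k.
    by move=> k; rewrite /f; case: constructive_indefinite_description.
  have [g Hg] := Hex V f.
  exists g; apply: Hun => k kj.
  by rewrite Hu // -ocA // Hg // Hf.
Qed.

Definition closedP (C : starcat) (X : Obj C) (P : forall B : Obj C, Mor C B X -> Prop) :=
 (forall B, P B 0) /\
 (forall B (g g' : Mor C B X), P B g -> P B g' -> P B (g - g')) /\
 (forall B B' (g : Mor C B X) (h : Mor C B' B), P B g -> P B' (g \oc h)).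

Definition Sp (C : starcat) (X : Obj C) (A : nat -> Obj C)
  (f : forall k, Mor C (A k) X) (m : nat) (B : Obj C) (g : Mor C B X) :=
  forall P, closedP P -> (forall k, (k < m)%N -> P (A k) (f k)) -> P B g.

Lemma closedP_add (C : starcat) (X : Obj C) P (HP : @closedP C X P) B (g g' : Mor C B X) :
  P B g -> P B g' -> P B (g + g').
Proof.
case: HP => H0 [Hsb _] Pg Pg'.
have -> : g + g' = g - (0 - g') by rewrite sub0r opprK.
by apply: (Hsb) => //; apply: (Hsb).
Qed.

Lemma closedP_sum (C : starcat) (X : Obj C) P (HP : @closedP C X P) B m
  (F : 'I_m -> Mor C B X) : (forall i, P B (F i)) -> P B (\sum_(i < m) F i).
Proof.
move=> HF; apply: (big_ind (P B)); first by case: HP.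
  by move=> x y; apply: closedP_add.
by move=> i _; apply: HF.
Qed.

Lemma Sp_closed (C : starcat) (X : Obj C) (A : nat -> Obj C)
  (f : forall k, Mor C (A k) X) m : closedP (Sp f m).
Proof.
split; last split.
- by move=> B P [H0 _] _.
- move=> B g g' Hg Hg' P HP Hf; have [_ [Hsb _]] := HP.
  by apply: (Hsb); [apply: Hg | apply: Hg'].
- move=> B B' g h Hg P HP Hf; have [_ [_ HC]] := HP.
  by apply: (HC); apply: Hg.
Qed.

Lemma Sp_gen (C : starcat) (X : Obj C) (A : nat -> Obj C)
  (f : forall k, Mor C (A k) X) m k : (k < m)%N -> Sp f m (f k).
Proof. by move=> km P _ Hf; apply: Hf. Qed.

Lemma Sp_mono (C : starcat) (X : Obj C) (A : nat -> Obj C)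
  (f : forall k, Mor C (A k) X) m m' B (g : Mor C B X) :
  (m <= m')%N -> Sp f m g -> Sp f m' g.
Proof.
by move=> mm Hg P HP Hf; apply: Hg => // k km; apply: Hf; apply: leq_trans mm.
Qed.

Lemma closedP_le (C : starcat) (HA : additive_star_category C) (X V : Obj C)
  (v : Mor C V X) : closedP (fun B (g : Mor C B X) => sub_le g v).
Proof.
split; last split.
- by move=> B; exists 0; rewrite oc0r.
- move=> B g g' [h ->] [h' ->]; exists (h - h'); by rewrite ocBr.
- move=> B B' g h [h' ->]; exists (h' \oc h); by rewrite ocA.
Qed.

Lemma closedP_ann (C : starcat) (HA : additive_star_category C) (X Y : Obj C)
  (q : Mor C X Y) : closedP (fun B (g : Mor C B X) => q \oc g = 0).
Proof.
split; last split.
- by move=> B; rewrite oc0r.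
- by move=> B g g' e e'; rewrite ocBr // e e' subrr.
- by move=> B B' g h e; rewrite ocA // e oc0l.
Qed.
Unset Implicit Arguments.

Theorem proposition4p4 (C : starcat) (HC : pre_Hilbert C)
    (n : nat) (X : Obj C) (A : nat -> Obj C) (s : forall k, Mor C (A k) X)
    (Hsplit : split_cospan n s)
    (t : forall k, Mor C (A k) X)
    (Ht0 : (0 < n)%N -> t 0%N = s 0%N)
    (HtS : forall m : nat, (m.+1 < n)%N ->
       t m.+1 = s m.+1 -
         \sum_(k < m.+1) (t k \oc minv ((t k)^*c \oc t k) \oc (t k)^*c \oc s m.+1)) :
  orthogonal_cospan n t /\
  (forall k, (k < n)%N -> closed_mono (t k)) /\
  (forall m, (0 < m)%N -> (m <= n)%N ->
     exists (U : Obj C) (u : Mor C U X), is_union u t m /\ is_union u s m).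
Proof.
move: HC => [HA [[Z HZ] [HR2 [HR3 _]]]].
have [r [Hr1 Hr0]] := Hsplit.
have tsp : forall k, (k < n)%N -> Sp s k.+1 (t k).
  elim/ltn_ind => k IH kn.
  case: k IH kn => [|m] IH kn.
    by rewrite Ht0 //; apply: Sp_gen.
  have HP := Sp_closed s m.+2; have [_ [Hsb Hco]] := HP.
  rewrite HtS //; apply: (Hsb); first exact: Sp_gen.
  apply: (closedP_sum HP) => i; apply: (Hco); apply: (Hco); apply: (Hco).
  apply: (@Sp_mono _ _ _ _ i.+1); first by rewrite ltnS ltnW.
  by apply: IH => //; apply: ltn_trans kn.
have ssp : forall k, (k < n)%N -> Sp t k.+1 (s k).
  case=> [|m] kn.
    by rewrite -Ht0 //; apply: Sp_gen.
  have HP := Sp_closed t m.+2; have [_ [Hsb Hco]] := HP.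
  have -> : s m.+1 = t m.+1 + \sum_(k < m.+1) (t k \oc minv ((t k)^*c \oc t k) \oc (t k)^*c \oc s m.+1).
    by rewrite HtS // subrK.
  apply: (closedP_add HP); first exact: Sp_gen.
  apply: (closedP_sum HP) => i; apply: (Hco); apply: (Hco); apply: (Hco).
  by apply: Sp_gen; rewrite ltnS ltnW.
have rt0 : forall i k, (k < i)%N -> (i < n)%N -> r i \oc t k = 0.
  move=> i k ki iN.
  apply: (tsp k (ltn_trans ki iN) (fun B (g : Mor C B X) => r i \oc g = 0)); first exact: closedP_ann.
  move=> j jk; apply: Hr0 => //.
    by apply: leq_trans jk (ltn_trans ki iN).
  by move=> e; move: jk; rewrite e ltnS leqNgt ki.
have rt1 : forall k, (k < n)%N -> r k \oc t k = idm.
  case=> [|m] kn; first by rewrite Ht0 // Hr1.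
  rewrite HtS // ocBr // oc_sumr // big1 ?subr0 ?Hr1 //.
  by move=> i _; rewrite !ocA // rt0 // !oc0l.
have cm : forall k, (k < n)%N -> closed_mono (t k).
  by move=> k kn; apply: (split_closed HA HR3 (rt1 k kn)).
have swap : forall j k, (t j)^*c \oc t k = ((t k)^*c \oc t j)^*c.
  by move=> j k; rewrite stM // stK.
have orth1 : forall m, (m < n)%N -> forall j, (j < m)%N -> (t j)^*c \oc t m = 0.
  elim/ltn_ind => m IH mn j jm.
  case: m IH mn jm => [|m] IH mn jm; first by [].
  rewrite HtS // ocBr // oc_sumr // (bigD1 (Ordinal jm)) //= big1 ?addr0.
    have [_ e] := minvP (cm j (ltn_trans jm mn)).
    by rewrite !ocA // e oc1l // subrr.
  move=> i ine; rewrite !ocA //.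
  have ij : (i : nat) <> j by move=> e; move/eqP: ine; apply; apply: val_inj.
  have iN : (i < n)%N by apply: ltn_trans (ltn_ord i) mn.
  have jN : (j < n)%N by apply: ltn_trans jm mn.
  case: (ltngtP j i) => [ji|ij'|e].
  - by rewrite IH // !oc0l.
  - by rewrite swap IH // (st0 HA HZ) !oc0l.
  - by case: ij.
split; last split => //.
  move=> j k jn kn jk; case: (ltngtP j k) => [jk'|kj|e].
  - exact: orth1.
  - by rewrite swap orth1 // (st0 HA HZ).
  - by case: jk.
move=> m m0 mn.
have [U [u Hu]] := union_s HA HZ HR2 Hr1 Hr0 mn.
exists U, u; split => //.
have [umono [Hle Hsup]] := Hu.
split => //; split.
  move=> k km; apply: (tsp k (leq_trans km mn) (fun B (g : Mor C B X) => sub_le g u)); first exact: closedP_le.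
  by move=> j jk; apply: Hle; apply: leq_trans jk km.
move=> V v vm Hv; apply: Hsup => // k km.
apply: (ssp k (leq_trans km mn) (fun B (g : Mor C B X) => sub_le g v)); first exact: closedP_le.
by move=> j jk; apply: Hv; apply: leq_trans jk km.
Qed.
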